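(* Let $\tau=\frac{1+\sqrt5}{2}$, $\tau'=\frac{1-\sqrt5}{2}$, $\mathbb{Z}[\tau]=\{a+b\tau: a,b\in\mathbb{Z}\}$ and $\mathbb{Z}[\tau]^-=\{x\in\mathbb{Z}[\tau]: x\le 0\}$ (as a real number). For $k\in\{2,3,4\}$ let $A_k$ be the $k\times k$ matrix $$A_2=\begin{pmatrix}2&-\tau\\-\tau&2\end{pmatrix},\quad A_3=\begin{pmatrix}2&-1&0\\-1&2&-\tau\\0&-\tau&2\end{pmatrix},\quad A_4=\begin{pmatrix}2&-1&0&0\\-1&2&-1&0\\0&-1&2&-\tau\\0&0&-\tau&2\end{pmatrix}.$$ Consider $(k+1)\times(k+1)$ matrices of the form $\begin{pmatrix}2&a^T\\ a&A_k\end{pmatrix}$ with $a\in(\mathbb{Z}[\tau]^-)^k$ (a column vector). Then, for each $k\in\{2,3,4\}$, there is exactly one such matrix with determinant $0$, namely the one with $a=(\tau',\tau')^T$ for $k=2$, $a=(0,\tau',0)^T$ for $k=3$, and $a=(\tau',0,0,0)^T$ for $k=4$.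
   Context: $A_2,A_3,A_4$ are the Cartan matrices of the noncrystallographic Coxeter groups $H_2,H_3,H_4$ (with a fixed ordering of simple roots); the matrices in the conclusion are the extended Cartan matrices of their affine extensions. A generalized (extended) Cartan matrix $(a_{ij})$ here is required to satisfy $a_{ii}=2$, $a_{ij}=a_{ji}$, $a_{ij}\in\mathbb{Z}[\tau]^-$ for $i\ne j$, and $\det(a_{ij})=0$. *)

(* Defs.v *)
From HB Require Import structures.
From mathcomp Require Import all_boot all_order all_algebra.
From mathcomp Require Import reals.
Set Implicit Arguments. Unset Strict Implicit. Unset Printing Implicit Defensive.
Import Order.TTheory GRing.Theory Num.Theory.
Local Open Scope ring_scope.

Section Defs.
Variable R : realType.

Definition tau : R := (1 + Num.sqrt 5) / 2.
Definition tau' : R := (1 - Num.sqrt 5) / 2.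

Definition in_Ztau (x : R) : Prop := exists a b : int, x = a%:~R + b%:~R * tau.

Definition in_Ztau_neg (x : R) : Prop := in_Ztau x /\ x <= 0.

Definition mx_of_rows (n : nat) (s : seq (seq R)) : 'M[R]_n :=
  \matrix_(i < n, j < n) nth 0 (nth [::] s i) j.

Definition cv_of_seq (n : nat) (s : seq R) : 'cV[R]_n :=
  \col_(i < n) nth 0 s i.

Definition A2 : 'M[R]_2 := mx_of_rows 2
  [:: [:: 2; - tau];
      [:: - tau; 2]].
Definition A3 : 'M[R]_3 := mx_of_rows 3
  [:: [:: 2; -1; 0];
      [:: -1; 2; - tau];
      [:: 0; - tau; 2]].
Definition A4 : 'M[R]_4 := mx_of_rows 4
  [:: [:: 2; -1; 0; 0];
      [:: -1; 2; -1; 0];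
      [:: 0; -1; 2; - tau];
      [:: 0; 0; - tau; 2]].

Definition ext_mx (k : nat) (A : 'M[R]_k) (a : 'cV[R]_k) : 'M[R]_(1 + k) :=
  block_mx (2%:M : 'M[R]_1) a^T a A.

Definition unique_extension (k : nat) (A : 'M[R]_k) (a0 : 'cV[R]_k) : Prop :=
  [/\ (forall i, in_Ztau_neg (a0 i 0)),
      \det (ext_mx A a0) = 0 &
      forall a : 'cV[R]_k, (forall i, in_Ztau_neg (a i 0)) ->
        \det (ext_mx A a) = 0 -> a = a0].

End Defs.

(* Main.v *)
Require Import Defs.
From HB Require Import structures.
From mathcomp Require Import all_boot all_order all_algebra.
From mathcomp Require Import reals.
From mathcomp Require Import ring lra zify.
Import Order.TTheory GRing.Theory Num.Theory.
Local Open Scope ring_scope.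
Set Warnings "-notation-overridden,-ambiguous-paths".

Section Pre.
Variable R : realType.
Local Notation t := (tau R).
Local Notation s := (Num.sqrt (5 : R)).

Lemma s2 : s ^+ 2 = 5.
Proof. by rewrite sqr_sqrtr. Qed.
Lemma s_ge0 : 0 <= s.
Proof. exact: sqrtr_ge0. Qed.
Lemma t2 : t ^+ 2 = t + 1.
Proof. have h := s2. rewrite /tau. lra. Qed.
Lemma t3 : t ^+ 3 = 2 * t + 1.
Proof. have h := t2. rewrite exprS h. have: t * (t + 1) = t^+2 + t by ring. lra. Qed.
Lemma t4 : t ^+ 4 = 3 * t + 2.
Proof. have h := t2. have h3 := t3. rewrite exprS h3. have: t * (2 * t + 1) = 2 * t^+2 + t by ring. lra. Qed.
Lemma tb : 144/89 < t /\ t < 89/55.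
Proof. have h := s2; have h0 := s_ge0. rewrite /tau. split; nra. Qed.
Lemma tau'E : tau' R = 1 - t.
Proof. rewrite /tau' /tau. lra. Qed.

Lemma no_sq5 (a b : nat) : (0 < b)%N -> (a ^ 2 = 5 * b ^ 2)%N -> False.
Proof.
move=> hb e.
have ha : (0 < a)%N.
  rewrite lt0n; apply/negP => /eqP a0; move: e; rewrite a0; nia.
have := congr1 (logn 5) e.
rewrite lognM // ?expn_gt0 ?hb // !lognX.
have -> : logn 5 5 = 1%N by rewrite -{2}(expn1 5) pfactorK.
move=> h. have := congr1 odd h. rewrite oddD !oddM /=. by [].
Qed.

Lemma irr (p q : int) : p%:~R + q%:~R * t = 0 -> p = 0 /\ q = 0.
Proof.
move=> h.
have [q0|qn0] := eqVneq q 0.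
  move: h; rewrite q0 mul0r addr0 => /eqP; rewrite intr_eq0 => /eqP ->. by [].
exfalso.
have hs : ((2 * p + q)%:~R : R) = - (q%:~R * s).
  move: h. rewrite /tau. move=> h. have : (2 * p + q)%:~R = 2 * p%:~R + q%:~R :> R by ring.
  move=> ->. lra.
have e : ((2 * p + q) ^+ 2)%:~R = (5 * q ^+ 2)%:~R :> R.
  have -> : ((2 * p + q) ^+ 2)%:~R = ((2 * p + q)%:~R) ^+ 2 :> R by ring.
  rewrite hs sqrrN exprMn s2. ring.
move/intr_inj: e => e.
have := congr1 absz e. rewrite abszM !abszX /= => e2.
apply: (@no_sq5 (absz (2 * p + q)) (absz q)) => //.
by rewrite absz_gt0.
Qed.
Lemma schur k (A B : 'M[R]_k) (d : R) (a : 'cV[R]_k) :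
  A *m B = d%:M -> d != 0 ->
  (\det (ext_mx A a) == 0) = ((a^T *m B *m a) 0 0 == 2 * d).
Proof.
move=> hAB hd.
pose N := block_mx (d%:M : 'M[R]_1) (0 : 'M[R]_(1, k)) (- (B *m a)) (1%:M : 'M[R]_k).
have hM : ext_mx A a *m N =
   block_mx ((2 * d - (a^T *m B *m a) 0 0)%:M : 'M[R]_1) a^T 0 A.
  rewrite /ext_mx /N mulmx_block.
  congr block_mx.
  - rewrite -scalar_mxM mulmxN mulmxA.
    apply/matrixP => i j; rewrite !ord1 !mxE /= !mulr1n. by [].
  - by rewrite mulmx0 mulmx1 add0r.
  - by rewrite mul_mx_scalar mulmxN mulmxA hAB mul_scalar_mx subrr.
  - by rewrite mulmx0 mulmx1 add0r.
have hdetN : \det N = d by rewrite /N det_lblock det1 mulr1 det_scalar1.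
have hdetA : \det A != 0.
  apply/negP => /eqP hA.
  have := congr1 determinant hAB. rewrite det_mulmx hA mul0r det_scalar => /esym/eqP.
  by rewrite expf_eq0 (negbTE hd) andbF.
have := congr1 determinant hM.
rewrite det_mulmx hdetN det_ublock det_scalar1 => e.
apply/eqP/eqP => h.
  move: e; rewrite h mul0r => /esym/eqP; rewrite mulf_eq0 (negbTE hdetA) orbF subr_eq0.
  by move/eqP.
move: e; rewrite h subrr mul0r => /eqP; rewrite mulf_eq0 (negbTE hd) orbF. by move/eqP.
Qed.
Definition B2 : 'M[R]_2 := mx_of_rows 2 [:: [:: 2; t]; [:: t; 2]].
Definition B3 : 'M[R]_3 := mx_of_rows 3
  [:: [:: 3 - t; 2; t]; [:: 2; 4; 2 * t]; [:: t; 2 * t; 3]].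
Definition B4 : 'M[R]_4 := mx_of_rows 4
  [:: [:: 4 - 2 * t; 3 - t; 2; t]; [:: 3 - t; 6 - 2 * t; 4; 2 * t];
      [:: 2; 4; 6; 3 * t]; [:: t; 2 * t; 3 * t; 4]].

Lemma AB2 : A2 R *m B2 = (3 - t)%:M.
Proof.
have h := t2.
apply/matrixP => i j; rewrite !mxE !big_ord_recr big_ord0 /= !mxE.
case: i => [[|[|i]] Hi] //; case: j => [[|[|j]] Hj] //=; rewrite /= ?mulr1n ?mulr0n; lra.
Qed.
Lemma AB3 : A3 R *m B3 = (4 - 2 * t)%:M.
Proof.
have h := t2.
apply/matrixP => i j; rewrite !mxE !big_ord_recr big_ord0 /= !mxE.
case: i => [[|[|[|i]]] Hi] //; case: j => [[|[|[|j]]] Hj] //=; rewrite /= ?mulr1n ?mulr0n; lra.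
Qed.
Lemma AB4 : A4 R *m B4 = (5 - 3 * t)%:M.
Proof.
have h := t2.
apply/matrixP => i j; rewrite !mxE !big_ord_recr big_ord0 /= !mxE.
case: i => [[|[|[|[|i]]]] Hi] //; case: j => [[|[|[|[|j]]]] Hj] //=; rewrite /= ?mulr1n ?mulr0n; lra.
Qed.
End Pre.

Set Implicit Arguments. Unset Strict Implicit.

Definition PP2 (T : comRingType) (M0 M1 N0 N1 : T) : T := (6 + (-2) * M0 * N1 + (-2) * M0 ^+ 2 + (-2) * M1 * N0 + (-2) * M1 ^+ 2 + (-2) * N0 * N1 + (-2) * N0 ^+ 2 + (-2) * N1 ^+ 2).
Definition QQ2 (T : comRingType) (M0 M1 N0 N1 : T) : T := ((-2) + (-2) * M0 * M1 + (-4) * M0 * N0 + (-2) * M0 * N1 + (-2) * M1 * N0 + (-4) * M1 * N1 + (-4) * N0 * N1 + (-2) * N0 ^+ 2 + (-2) * N1 ^+ 2).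
Definition PP3 (T : comRingType) (M0 M1 M2 N0 N1 N2 : T) : T := (8 + (-4) * M0 * M1 + 2 * M0 * N0 + (-2) * M0 * N2 + (-3) * M0 ^+ 2 + (-4) * M1 * N2 + (-4) * M1 ^+ 2 + (-2) * M2 * N0 + (-4) * M2 * N1 + (-3) * M2 ^+ 2 + (-4) * N0 * N1 + (-2) * N0 * N2 + (-2) * N0 ^+ 2 + (-4) * N1 * N2 + (-4) * N1 ^+ 2 + (-3) * N2 ^+ 2).
Definition QQ3 (T : comRingType) (M0 M1 M2 N0 N1 N2 : T) : T := ((-4) + (-2) * M0 * M2 + (-4) * M0 * N0 + (-4) * M0 * N1 + (-2) * M0 * N2 + M0 ^+ 2 + (-4) * M1 * M2 + (-4) * M1 * N0 + (-8) * M1 * N1 + (-4) * M1 * N2 + (-2) * M2 * N0 + (-4) * M2 * N1 + (-6) * M2 * N2 + (-4) * N0 * N1 + (-4) * N0 * N2 + (-1) * N0 ^+ 2 + (-8) * N1 * N2 + (-4) * N1 ^+ 2 + (-3) * N2 ^+ 2).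
Definition PP4 (T : comRingType) (M0 M1 M2 M3 N0 N1 N2 N3 : T) : T := (10 + (-6) * M0 * M1 + (-4) * M0 * M2 + 4 * M0 * N0 + 2 * M0 * N1 + (-2) * M0 * N3 + (-4) * M0 ^+ 2 + (-8) * M1 * M2 + 2 * M1 * N0 + 4 * M1 * N1 + (-4) * M1 * N3 + (-6) * M1 ^+ 2 + (-6) * M2 * N3 + (-6) * M2 ^+ 2 + (-2) * M3 * N0 + (-4) * M3 * N1 + (-6) * M3 * N2 + (-4) * M3 ^+ 2 + (-4) * N0 * N1 + (-4) * N0 * N2 + (-2) * N0 * N3 + (-2) * N0 ^+ 2 + (-8) * N1 * N2 + (-4) * N1 * N3 + (-4) * N1 ^+ 2 + (-6) * N2 * N3 + (-6) * N2 ^+ 2 + (-4) * N3 ^+ 2).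
Definition QQ4 (T : comRingType) (M0 M1 M2 M3 N0 N1 N2 N3 : T) : T := ((-6) + 2 * M0 * M1 + (-2) * M0 * M3 + (-4) * M0 * N0 + (-4) * M0 * N1 + (-4) * M0 * N2 + (-2) * M0 * N3 + 2 * M0 ^+ 2 + (-4) * M1 * M3 + (-4) * M1 * N0 + (-8) * M1 * N1 + (-8) * M1 * N2 + (-4) * M1 * N3 + 2 * M1 ^+ 2 + (-6) * M2 * M3 + (-4) * M2 * N0 + (-8) * M2 * N1 + (-12) * M2 * N2 + (-6) * M2 * N3 + (-2) * M3 * N0 + (-4) * M3 * N1 + (-6) * M3 * N2 + (-8) * M3 * N3 + (-2) * N0 * N1 + (-4) * N0 * N2 + (-4) * N0 * N3 + (-8) * N1 * N2 + (-8) * N1 * N3 + (-2) * N1 ^+ 2 + (-12) * N2 * N3 + (-6) * N2 ^+ 2 + (-4) * N3 ^+ 2).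

Section Main.
Variable R : realType.
Local Notation t := (tau R).
Local Notation s := (Num.sqrt (5 : R)).
Local Notation B2 := (B2 R).
Local Notation B3 := (B3 R).
Local Notation B4 := (B4 R).
Lemma sq_bound (X : R) : X ^+ 2 <= 6 -> - (5/2) < X /\ X < 5/2.
Proof. move=> h; split; nra. Qed.

Lemma cand_r (x M N : R) :
  144/89 < x -> x < 89/55 -> x ^+ 2 = x + 1 ->
  -6/5 <= M + N * x -> M + N * x <= 0 ->
  (M + N * (1 - x)) ^+ 2 <= 6 ->
  [/\ N < 2, -2 < N, (N = -1 -> 0 < M /\ M < 2),
      (N = 0 -> -2 < M /\ M < 1) & (N = 1 -> -3 < M /\ M < -1 /\ M <> -2)].
Proof.
move=> tl tu htt h1 h2 h3.
have [hx2 hx1] := @sq_bound _ h3.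
split.
- rewrite ltNge; apply/negP => hN.
  have : 0 <= (N - 2) * (2 * x - 3) by apply: mulr_ge0; lra.
  lra.
- rewrite ltNge; apply/negP => hN.
  have : 0 <= (-2 - N) * (2 * x - 3) by apply: mulr_ge0; lra.
  lra.
- move=> hN; rewrite hN in h1 h2; split; lra.
- move=> hN; rewrite hN in h1 h2; split; lra.
- move=> hN; rewrite hN in h1 h2 h3; split; [lra|split; [lra|]].
  move=> hM; rewrite hM in h3; lra.
Qed.

Lemma cand (m n : int) :
  -6/5 <= m%:~R + n%:~R * t -> m%:~R + n%:~R * t <= 0 ->
  (m%:~R + n%:~R * (1 - t)) ^+ 2 <= 6 :> R ->
  [\/ m = 0 /\ n = 0, m = -1 /\ n = 0 | m = 1 /\ n = -1].
Proof.
move=> h1 h2 h3.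
have [tl tu] := tb R.
have [hn1 hn2 hA hB hC] := @cand_r t _ _ tl tu (t2 R) h1 h2 h3.
move: hn1 hn2; rewrite -[2 : R]/(2%:~R) -[-2 : R]/((-2)%:~R) !ltr_int => hn1 hn2.
have : n = -1 \/ n = 0 \/ n = 1 by clear -hn1 hn2; lia.
case=> [hn|[hn|hn]].
- case: (hA _) => [|hm1 hm2]; first by rewrite hn.
  move: hm1 hm2; rewrite -[0 : R]/(0%:~R) -[2 : R]/(2%:~R) !ltr_int => hm1 hm2.
  have -> : m = 1 by clear -hm1 hm2; lia.
  by constructor 3.
- case: (hB _) => [|hm1 hm2]; first by rewrite hn.
  move: hm1 hm2; rewrite -[1 : R]/(1%:~R) -[-2 : R]/((-2)%:~R) !ltr_int => hm1 hm2.
  have : m = 0 \/ m = -1 by clear -hm1 hm2; lia.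
  by case=> ->; [constructor 1|constructor 2].
- case: (hC _) => [|hm1 [hm2 hm3]]; first by rewrite hn.
  move: hm1 hm2; rewrite -[-1 : R]/((-1)%:~R) -[-3 : R]/((-3)%:~R) !ltr_int => hm1 hm2.
  have hm : m = -2 by clear -hm1 hm2; lia.
  exfalso; apply: hm3; by rewrite hm.
Qed.

Lemma xlo (x : R) : 144/89 < x -> 0 < x - 144/89.
Proof. by rewrite subr_gt0. Qed.
Lemma xhi (x : R) : x < 89/55 -> 0 < 89/55 - x.
Proof. by rewrite subr_gt0. Qed.
Lemma sqb (X : R) : X ^+ 2 <= 36/25 -> -6/5 <= X.
Proof. move=> h; nra. Qed.
Lemma ztn' : in_Ztau_neg (tau' R).
Proof.
have [tl tu] := tb R.
split; last by rewrite (tau'E R); lra.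
exists 1, (-1); rewrite (tau'E R); ring.
Qed.
Lemma ztn0 : in_Ztau_neg (0 : R).
Proof. split => //. exists 0, 0; ring. Qed.

Lemma scal2 (x0 x1 : R) :
  ((cv_of_seq 2 [:: x0; x1])^T *m B2 *m cv_of_seq 2 [:: x0; x1]) 0 0 = 2 * x0 * x0 + t * x0 * x1 + t * x1 * x0 + 2 * x1 * x1.
Proof.
rewrite !mxE !big_ord_recr big_ord0 /= !mxE !big_ord_recr !big_ord0 /= !mxE /=.
ring.
Qed.

Lemma id2 (x M0 M1 N0 N1 : R) :
  2 * (3 - x) - (2 * (M0 + N0 * x) * (M0 + N0 * x) + x * (M0 + N0 * x) * (M1 + N1 * x) + x * (M1 + N1 * x) * (M0 + N0 * x) + 2 * (M1 + N1 * x) * (M1 + N1 * x)) =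
  PP2 M0 M1 N0 N1 + QQ2 M0 M1 N0 N1 * x + (x ^+ 2 - x - 1) * ((-2) * M0 * N1 + (-2) * M1 * N0 + (-2) * N0 * N1 + (-2) * N0 * N1 * x + (-2) * N0 ^+ 2 + (-2) * N1 ^+ 2).
Proof. rewrite /PP2 /QQ2; ring. Qed.

Lemma castPP2 (M0 M1 N0 N1 : int) :
  (PP2 M0 M1 N0 N1)%:~R = PP2 M0%:~R M1%:~R N0%:~R N1%:~R :> R.
Proof. rewrite /PP2; ring. Qed.
Lemma castQQ2 (M0 M1 N0 N1 : int) :
  (QQ2 M0 M1 N0 N1)%:~R = QQ2 M0%:~R M1%:~R N0%:~R N1%:~R :> R.
Proof. rewrite /QQ2; ring. Qed.

Definition S2 (M N : R) : R := (5 * M ^+ 2 + 5 * N ^+ 2).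
Lemma idS2 (x M N : R) :
  (3 - x) * (M + N * x) ^+ 2 + (2 + x) * (M + N * (1 - x)) ^+ 2
  = S2 M N + (x ^+ 2 - x - 1) * ((-4) * M * N + 3 * N ^+ 2).
Proof. rewrite /S2; ring. Qed.

Lemma cert2_0 (M0 M1 N0 N1 : R) :
  PP2 M0 M1 N0 N1 = 0 -> QQ2 M0 M1 N0 N1 = 0 -> S2 M0 N0 <= 400/19.
Proof.
rewrite /PP2 /QQ2 /S2 => hP hQ.
have := sqr_ge0 (13 * M0 + 8 * M1 + 16 * N0 + 24 * N1).
have := sqr_ge0 (44 * M1 + 23 * N0 + 2 * N1).
have := sqr_ge0 (21 * N0 + 20 * N1).
have := sqr_ge0 (1 * N1).
lra.
Qed.

Lemma cert2_1 (M0 M1 N0 N1 : R) :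
  PP2 M0 M1 N0 N1 = 0 -> QQ2 M0 M1 N0 N1 = 0 -> S2 M1 N1 <= 400/19.
Proof.
rewrite /PP2 /QQ2 /S2 => hP hQ.
have := sqr_ge0 (4 * M0 + 1 * M1 + 2 * N0 + 3 * N1).
have := sqr_ge0 (11 * M1 + 20 * N0 + 10 * N1).
have := sqr_ge0 (2 * N0 + 1 * N1).
have := sqr_ge0 (1 * N1).
lra.
Qed.

Lemma xp2 (x M N : R) : 144/89 < x -> x < 89/55 -> x ^+ 2 = x + 1 ->
  S2 M N <= 400/19 -> (M + N * (1 - x)) ^+ 2 <= 6.
Proof.
move=> tl tu htt hS.
have hz : x ^+ 2 - x - 1 = 0 by rewrite htt; ring.
have := idS2 x M N; rewrite hz mul0r addr0 => hid.
have h1 : 0 <= (3 - x) * (M + N * x) ^+ 2 by apply: mulr_ge0; [lra|apply: sqr_ge0].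
have h2 : 0 <= ((2 + x) - 18/5) * (M + N * (1 - x)) ^+ 2 by apply: mulr_ge0; [lra|apply: sqr_ge0].
move: hid h1 h2 hS. set Y := (M + N * (1 - x)) ^+ 2. set Z := (M + N * x) ^+ 2. move=> hid h1 h2 hS.
lra.
Qed.

Lemma xb2_0 (x x0 x1 : R) : 144/89 < x -> x < 89/55 -> x0 <= 0 -> x1 <= 0 ->
  2 * x0 * x0 + x * x0 * x1 + x * x1 * x0 + 2 * x1 * x1 = 2 * (3 - x) -> x0 ^+ 2 <= 36/25.
Proof.
move=> tl tu h0 h1 hq.
have p00 : 0 <= x0 * x0 by rewrite -expr2; apply: sqr_ge0.
have := mulr_ge0 (ltW (xlo tl)) p00.
have := mulr_ge0 (ltW (xhi tu)) p00.
have p01 : 0 <= x0 * x1 by apply: mulr_le0.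
have := mulr_ge0 (ltW (xlo tl)) p01.
have := mulr_ge0 (ltW (xhi tu)) p01.
have p11 : 0 <= x1 * x1 by rewrite -expr2; apply: sqr_ge0.
have := mulr_ge0 (ltW (xlo tl)) p11.
have := mulr_ge0 (ltW (xhi tu)) p11.
rewrite expr2. lra.
Qed.

Lemma xb2_1 (x x0 x1 : R) : 144/89 < x -> x < 89/55 -> x0 <= 0 -> x1 <= 0 ->
  2 * x0 * x0 + x * x0 * x1 + x * x1 * x0 + 2 * x1 * x1 = 2 * (3 - x) -> x1 ^+ 2 <= 36/25.
Proof.
move=> tl tu h0 h1 hq.
have p00 : 0 <= x0 * x0 by rewrite -expr2; apply: sqr_ge0.
have := mulr_ge0 (ltW (xlo tl)) p00.
have := mulr_ge0 (ltW (xhi tu)) p00.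
have p01 : 0 <= x0 * x1 by apply: mulr_le0.
have := mulr_ge0 (ltW (xlo tl)) p01.
have := mulr_ge0 (ltW (xhi tu)) p01.
have p11 : 0 <= x1 * x1 by rewrite -expr2; apply: sqr_ge0.
have := mulr_ge0 (ltW (xlo tl)) p11.
have := mulr_ge0 (ltW (xhi tu)) p11.
rewrite expr2. lra.
Qed.

Lemma uniq2 (a : 'cV[R]_2) : (forall i, in_Ztau_neg (a i 0)) ->
  \det (ext_mx (A2 R) a) = 0 -> a = cv_of_seq 2 [:: tau' R; tau' R].
Proof.
move=> ha hdet.
have ea : a = cv_of_seq 2 [:: a (inord 0) 0; a (inord 1) 0].
  apply/matrixP => i j; rewrite ord1 mxE.
  case: i => [i Hi]; do 2 (case: i Hi => [|i] Hi; first by congr (a _ _); apply: val_inj; rewrite /= inordK).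
  by exfalso; move: Hi; rewrite !ltnS ltn0.
move: hdet; rewrite ea.
move: (ha (inord 0)) (ha (inord 1)).
move: (a (inord 0) 0) (a (inord 1) 0) => x0 x1.
move=> [[m0 [n0 ->]] h0] [[m1 [n1 ->]] h1].
have [tl tu] := tb R.
have hd : (3 - t) != 0 by apply: lt0r_neq0; lra.
move/eqP; rewrite (@schur R _ _ _ _ _ (AB2 R) hd) scal2 => /eqP hq.
have hz : t ^+ 2 - t - 1 = 0 by rewrite (t2 R); ring.
have hPQ := id2 t m0%:~R m1%:~R n0%:~R n1%:~R.
rewrite hz mul0r addr0 hq subrr in hPQ.
have [hP hQ] : PP2 m0 m1 n0 n1 = 0 /\ QQ2 m0 m1 n0 n1 = 0.
  apply: (@irr R); rewrite castPP2 castQQ2; exact/esym.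
have hPr : PP2 m0%:~R m1%:~R n0%:~R n1%:~R = 0 :> R by rewrite -castPP2 hP.
have hQr : QQ2 m0%:~R m1%:~R n0%:~R n1%:~R = 0 :> R by rewrite -castQQ2 hQ.
have hxb0 := xb2_0 tl tu h0 h1 hq.
have c0 := cand (sqb hxb0) h0 (xp2 tl tu (t2 R) (cert2_0 hPr hQr)).
have hxb1 := xb2_1 tl tu h0 h1 hq.
have c1 := cand (sqb hxb1) h1 (xp2 tl tu (t2 R) (cert2_1 hPr hQr)).
move: hP hQ.
case: c0 => [[-> ->]|[-> ->]|[-> ->]]; case: c1 => [[-> ->]|[-> ->]|[-> ->]].
all: move=> hP hQ.
all: try (exfalso; clear -hP hQ; move: hP hQ; rewrite /PP2 /QQ2; lia).
rewrite (tau'E R); congr (cv_of_seq _ [:: _; _]); ring.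
Qed.

Lemma ex2 : (forall i, in_Ztau_neg ((cv_of_seq 2 [:: tau' R; tau' R]) i 0)) /\
  \det (ext_mx (A2 R) (cv_of_seq 2 [:: tau' R; tau' R])) = 0.
Proof.
split.
- move=> i; rewrite mxE; case: i => [i Hi].
  do 2 (case: i Hi => [|i] Hi; first by rewrite /=; first [exact: ztn' | exact: ztn0]).
  by exfalso; move: Hi; rewrite !ltnS ltn0.
- have [tl tu] := tb R.
  have hd : (3 - t) != 0 by apply: lt0r_neq0; lra.
  apply/eqP; rewrite (@schur R _ _ _ _ _ (AB2 R) hd) scal2; apply/eqP.
  rewrite (tau'E R). have := t2 R. have := t3 R. lra.
Qed.

Lemma case2 : unique_extension (A2 R) (cv_of_seq 2 [:: tau' R; tau' R]).
Proof. have [h1 h2] := ex2. split => //. exact: uniq2. Qed.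

Lemma scal3 (x0 x1 x2 : R) :
  ((cv_of_seq 3 [:: x0; x1; x2])^T *m B3 *m cv_of_seq 3 [:: x0; x1; x2]) 0 0 = (3 - t) * x0 * x0 + 2 * x0 * x1 + t * x0 * x2 + 2 * x1 * x0 + 4 * x1 * x1 + 2 * t * x1 * x2 + t * x2 * x0 + 2 * t * x2 * x1 + 3 * x2 * x2.
Proof.
rewrite !mxE !big_ord_recr big_ord0 /= !mxE !big_ord_recr !big_ord0 /= !mxE /=.
ring.
Qed.

Lemma id3 (x M0 M1 M2 N0 N1 N2 : R) :
  2 * (4 - 2 * x) - ((3 - x) * (M0 + N0 * x) * (M0 + N0 * x) + 2 * (M0 + N0 * x) * (M1 + N1 * x) + x * (M0 + N0 * x) * (M2 + N2 * x) + 2 * (M1 + N1 * x) * (M0 + N0 * x) + 4 * (M1 + N1 * x) * (M1 + N1 * x) + 2 * x * (M1 + N1 * x) * (M2 + N2 * x) + x * (M2 + N2 * x) * (M0 + N0 * x) + 2 * x * (M2 + N2 * x) * (M1 + N1 * x) + 3 * (M2 + N2 * x) * (M2 + N2 * x)) =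
  PP3 M0 M1 M2 N0 N1 N2 + QQ3 M0 M1 M2 N0 N1 N2 * x + (x ^+ 2 - x - 1) * (2 * M0 * N0 + (-2) * M0 * N2 + (-4) * M1 * N2 + (-2) * M2 * N0 + (-4) * M2 * N1 + (-4) * N0 * N1 + (-2) * N0 * N2 + (-2) * N0 * N2 * x + (-2) * N0 ^+ 2 + N0 ^+ 2 * x + (-4) * N1 * N2 + (-4) * N1 * N2 * x + (-4) * N1 ^+ 2 + (-3) * N2 ^+ 2).
Proof. rewrite /PP3 /QQ3; ring. Qed.

Lemma castPP3 (M0 M1 M2 N0 N1 N2 : int) :
  (PP3 M0 M1 M2 N0 N1 N2)%:~R = PP3 M0%:~R M1%:~R M2%:~R N0%:~R N1%:~R N2%:~R :> R.
Proof. rewrite /PP3; ring. Qed.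
Lemma castQQ3 (M0 M1 M2 N0 N1 N2 : int) :
  (QQ3 M0 M1 M2 N0 N1 N2)%:~R = QQ3 M0%:~R M1%:~R M2%:~R N0%:~R N1%:~R N2%:~R :> R.
Proof. rewrite /QQ3; ring. Qed.

Definition S3 (M N : R) : R := ((-4) * M * N + 6 * M ^+ 2 + 4 * N ^+ 2).
Lemma idS3 (x M N : R) :
  (4 - 2 * x) * (M + N * x) ^+ 2 + (2 + 2 * x) * (M + N * (1 - x)) ^+ 2
  = S3 M N + (x ^+ 2 - x - 1) * ((-8) * M * N + 2 * N ^+ 2).
Proof. rewrite /S3; ring. Qed.

Lemma cert3_0 (M0 M1 M2 N0 N1 N2 : R) :
  PP3 M0 M1 M2 N0 N1 N2 = 0 -> QQ3 M0 M1 M2 N0 N1 N2 = 0 -> S3 M0 N0 <= 480/19.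
Proof.
rewrite /PP3 /QQ3 /S3 => hP hQ.
have := sqr_ge0 (43 * M0 + 80 * M1 + 20 * M2 + 19 * N0 + 40 * N1 + 60 * N2).
have := sqr_ge0 (12 * M1 + 3 * M2 + 5 * N0 + 6 * N1 + 9 * N2).
have := sqr_ge0 (11 * M2 + 5 * N0 + 10 * N1 + 3 * N2).
have := sqr_ge0 (191 * N0 + 360 * N1 + 240 * N2).
have := sqr_ge0 (3 * N1 + 2 * N2).
have := sqr_ge0 (1 * N2).
lra.
Qed.

Lemma cert3_1 (M0 M1 M2 N0 N1 N2 : R) :
  PP3 M0 M1 M2 N0 N1 N2 = 0 -> QQ3 M0 M1 M2 N0 N1 N2 = 0 -> S3 M1 N1 <= 480/19.
Proof.
rewrite /PP3 /QQ3 /S3 => hP hQ.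
have := sqr_ge0 (5 * M0 + 4 * M1 + 1 * M2 + 2 * N1 + 3 * N2).
have := sqr_ge0 (39 * M1 + 24 * M2 + 40 * N0 + 67 * N1 + 72 * N2).
have := sqr_ge0 (329 * M2 + 115 * N0 + 230 * N1 + 12 * N2).
have := sqr_ge0 (230 * N0 + 131 * N1 + 24 * N2).
have := sqr_ge0 (29 * N1 + 32 * N2).
have := sqr_ge0 (1 * N2).
lra.
Qed.

Lemma cert3_2 (M0 M1 M2 N0 N1 N2 : R) :
  PP3 M0 M1 M2 N0 N1 N2 = 0 -> QQ3 M0 M1 M2 N0 N1 N2 = 0 -> S3 M2 N2 <= 480/19.
Proof.
rewrite /PP3 /QQ3 /S3 => hP hQ.
have := sqr_ge0 (5 * M0 + 4 * M1 + 1 * M2 + 2 * N1 + 3 * N2).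
have := sqr_ge0 (12 * M1 + 3 * M2 + 5 * N0 + 6 * N1 + 9 * N2).
have := sqr_ge0 (53 * M2 + 50 * N0 + 100 * N1 + 49 * N2).
have := sqr_ge0 (115 * N0 + 18 * N1 + 12 * N2).
have := sqr_ge0 (3 * N1 + 2 * N2).
have := sqr_ge0 (1 * N2).
lra.
Qed.

Lemma xp3 (x M N : R) : 144/89 < x -> x < 89/55 -> x ^+ 2 = x + 1 ->
  S3 M N <= 480/19 -> (M + N * (1 - x)) ^+ 2 <= 6.
Proof.
move=> tl tu htt hS.
have hz : x ^+ 2 - x - 1 = 0 by rewrite htt; ring.
have := idS3 x M N; rewrite hz mul0r addr0 => hid.
have h1 : 0 <= (4 - 2 * x) * (M + N * x) ^+ 2 by apply: mulr_ge0; [lra|apply: sqr_ge0].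
have h2 : 0 <= ((2 + 2 * x) - 26/5) * (M + N * (1 - x)) ^+ 2 by apply: mulr_ge0; [lra|apply: sqr_ge0].
move: hid h1 h2 hS. set Y := (M + N * (1 - x)) ^+ 2. set Z := (M + N * x) ^+ 2. move=> hid h1 h2 hS.
lra.
Qed.

Lemma xb3_0 (x x0 x1 x2 : R) : 144/89 < x -> x < 89/55 -> x0 <= 0 -> x1 <= 0 -> x2 <= 0 ->
  (3 - x) * x0 * x0 + 2 * x0 * x1 + x * x0 * x2 + 2 * x1 * x0 + 4 * x1 * x1 + 2 * x * x1 * x2 + x * x2 * x0 + 2 * x * x2 * x1 + 3 * x2 * x2 = 2 * (4 - 2 * x) -> x0 ^+ 2 <= 36/25.
Proof.
move=> tl tu h0 h1 h2 hq.
have p00 : 0 <= x0 * x0 by rewrite -expr2; apply: sqr_ge0.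
have := mulr_ge0 (ltW (xlo tl)) p00.
have := mulr_ge0 (ltW (xhi tu)) p00.
have p01 : 0 <= x0 * x1 by apply: mulr_le0.
have := mulr_ge0 (ltW (xlo tl)) p01.
have := mulr_ge0 (ltW (xhi tu)) p01.
have p02 : 0 <= x0 * x2 by apply: mulr_le0.
have := mulr_ge0 (ltW (xlo tl)) p02.
have := mulr_ge0 (ltW (xhi tu)) p02.
have p11 : 0 <= x1 * x1 by rewrite -expr2; apply: sqr_ge0.
have := mulr_ge0 (ltW (xlo tl)) p11.
have := mulr_ge0 (ltW (xhi tu)) p11.
have p12 : 0 <= x1 * x2 by apply: mulr_le0.
have := mulr_ge0 (ltW (xlo tl)) p12.
have := mulr_ge0 (ltW (xhi tu)) p12.
have p22 : 0 <= x2 * x2 by rewrite -expr2; apply: sqr_ge0.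
have := mulr_ge0 (ltW (xlo tl)) p22.
have := mulr_ge0 (ltW (xhi tu)) p22.
rewrite expr2. lra.
Qed.

Lemma xb3_1 (x x0 x1 x2 : R) : 144/89 < x -> x < 89/55 -> x0 <= 0 -> x1 <= 0 -> x2 <= 0 ->
  (3 - x) * x0 * x0 + 2 * x0 * x1 + x * x0 * x2 + 2 * x1 * x0 + 4 * x1 * x1 + 2 * x * x1 * x2 + x * x2 * x0 + 2 * x * x2 * x1 + 3 * x2 * x2 = 2 * (4 - 2 * x) -> x1 ^+ 2 <= 36/25.
Proof.
move=> tl tu h0 h1 h2 hq.
have p00 : 0 <= x0 * x0 by rewrite -expr2; apply: sqr_ge0.
have := mulr_ge0 (ltW (xlo tl)) p00.
have := mulr_ge0 (ltW (xhi tu)) p00.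
have p01 : 0 <= x0 * x1 by apply: mulr_le0.
have := mulr_ge0 (ltW (xlo tl)) p01.
have := mulr_ge0 (ltW (xhi tu)) p01.
have p02 : 0 <= x0 * x2 by apply: mulr_le0.
have := mulr_ge0 (ltW (xlo tl)) p02.
have := mulr_ge0 (ltW (xhi tu)) p02.
have p11 : 0 <= x1 * x1 by rewrite -expr2; apply: sqr_ge0.
have := mulr_ge0 (ltW (xlo tl)) p11.
have := mulr_ge0 (ltW (xhi tu)) p11.
have p12 : 0 <= x1 * x2 by apply: mulr_le0.
have := mulr_ge0 (ltW (xlo tl)) p12.
have := mulr_ge0 (ltW (xhi tu)) p12.
have p22 : 0 <= x2 * x2 by rewrite -expr2; apply: sqr_ge0.
have := mulr_ge0 (ltW (xlo tl)) p22.
have := mulr_ge0 (ltW (xhi tu)) p22.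
rewrite expr2. lra.
Qed.

Lemma xb3_2 (x x0 x1 x2 : R) : 144/89 < x -> x < 89/55 -> x0 <= 0 -> x1 <= 0 -> x2 <= 0 ->
  (3 - x) * x0 * x0 + 2 * x0 * x1 + x * x0 * x2 + 2 * x1 * x0 + 4 * x1 * x1 + 2 * x * x1 * x2 + x * x2 * x0 + 2 * x * x2 * x1 + 3 * x2 * x2 = 2 * (4 - 2 * x) -> x2 ^+ 2 <= 36/25.
Proof.
move=> tl tu h0 h1 h2 hq.
have p00 : 0 <= x0 * x0 by rewrite -expr2; apply: sqr_ge0.
have := mulr_ge0 (ltW (xlo tl)) p00.
have := mulr_ge0 (ltW (xhi tu)) p00.
have p01 : 0 <= x0 * x1 by apply: mulr_le0.
have := mulr_ge0 (ltW (xlo tl)) p01.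
have := mulr_ge0 (ltW (xhi tu)) p01.
have p02 : 0 <= x0 * x2 by apply: mulr_le0.
have := mulr_ge0 (ltW (xlo tl)) p02.
have := mulr_ge0 (ltW (xhi tu)) p02.
have p11 : 0 <= x1 * x1 by rewrite -expr2; apply: sqr_ge0.
have := mulr_ge0 (ltW (xlo tl)) p11.
have := mulr_ge0 (ltW (xhi tu)) p11.
have p12 : 0 <= x1 * x2 by apply: mulr_le0.
have := mulr_ge0 (ltW (xlo tl)) p12.
have := mulr_ge0 (ltW (xhi tu)) p12.
have p22 : 0 <= x2 * x2 by rewrite -expr2; apply: sqr_ge0.
have := mulr_ge0 (ltW (xlo tl)) p22.
have := mulr_ge0 (ltW (xhi tu)) p22.
rewrite expr2. lra.
Qed.

Lemma uniq3 (a : 'cV[R]_3) : (forall i, in_Ztau_neg (a i 0)) ->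
  \det (ext_mx (A3 R) a) = 0 -> a = cv_of_seq 3 [:: 0; tau' R; 0].
Proof.
move=> ha hdet.
have ea : a = cv_of_seq 3 [:: a (inord 0) 0; a (inord 1) 0; a (inord 2) 0].
  apply/matrixP => i j; rewrite ord1 mxE.
  case: i => [i Hi]; do 3 (case: i Hi => [|i] Hi; first by congr (a _ _); apply: val_inj; rewrite /= inordK).
  by exfalso; move: Hi; rewrite !ltnS ltn0.
move: hdet; rewrite ea.
move: (ha (inord 0)) (ha (inord 1)) (ha (inord 2)).
move: (a (inord 0) 0) (a (inord 1) 0) (a (inord 2) 0) => x0 x1 x2.
move=> [[m0 [n0 ->]] h0] [[m1 [n1 ->]] h1] [[m2 [n2 ->]] h2].
have [tl tu] := tb R.
have hd : (4 - 2 * t) != 0 by apply: lt0r_neq0; lra.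
move/eqP; rewrite (@schur R _ _ _ _ _ (AB3 R) hd) scal3 => /eqP hq.
have hz : t ^+ 2 - t - 1 = 0 by rewrite (t2 R); ring.
have hPQ := id3 t m0%:~R m1%:~R m2%:~R n0%:~R n1%:~R n2%:~R.
rewrite hz mul0r addr0 hq subrr in hPQ.
have [hP hQ] : PP3 m0 m1 m2 n0 n1 n2 = 0 /\ QQ3 m0 m1 m2 n0 n1 n2 = 0.
  apply: (@irr R); rewrite castPP3 castQQ3; exact/esym.
have hPr : PP3 m0%:~R m1%:~R m2%:~R n0%:~R n1%:~R n2%:~R = 0 :> R by rewrite -castPP3 hP.
have hQr : QQ3 m0%:~R m1%:~R m2%:~R n0%:~R n1%:~R n2%:~R = 0 :> R by rewrite -castQQ3 hQ.
have hxb0 := xb3_0 tl tu h0 h1 h2 hq.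
have c0 := cand (sqb hxb0) h0 (xp3 tl tu (t2 R) (cert3_0 hPr hQr)).
have hxb1 := xb3_1 tl tu h0 h1 h2 hq.
have c1 := cand (sqb hxb1) h1 (xp3 tl tu (t2 R) (cert3_1 hPr hQr)).
have hxb2 := xb3_2 tl tu h0 h1 h2 hq.
have c2 := cand (sqb hxb2) h2 (xp3 tl tu (t2 R) (cert3_2 hPr hQr)).
move: hP hQ.
case: c0 => [[-> ->]|[-> ->]|[-> ->]]; case: c1 => [[-> ->]|[-> ->]|[-> ->]]; case: c2 => [[-> ->]|[-> ->]|[-> ->]].
all: move=> hP hQ.
all: try (exfalso; clear -hP hQ; move: hP hQ; rewrite /PP3 /QQ3; lia).
rewrite (tau'E R); congr (cv_of_seq _ [:: _; _; _]); ring.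
Qed.

Lemma ex3 : (forall i, in_Ztau_neg ((cv_of_seq 3 [:: 0; tau' R; 0]) i 0)) /\
  \det (ext_mx (A3 R) (cv_of_seq 3 [:: 0; tau' R; 0])) = 0.
Proof.
split.
- move=> i; rewrite mxE; case: i => [i Hi].
  do 3 (case: i Hi => [|i] Hi; first by rewrite /=; first [exact: ztn' | exact: ztn0]).
  by exfalso; move: Hi; rewrite !ltnS ltn0.
- have [tl tu] := tb R.
  have hd : (4 - 2 * t) != 0 by apply: lt0r_neq0; lra.
  apply/eqP; rewrite (@schur R _ _ _ _ _ (AB3 R) hd) scal3; apply/eqP.
  rewrite (tau'E R). have := t2 R. have := t3 R. lra.
Qed.

Lemma case3 : unique_extension (A3 R) (cv_of_seq 3 [:: 0; tau' R; 0]).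
Proof. have [h1 h2] := ex3. split => //. exact: uniq3. Qed.

Lemma scal4 (x0 x1 x2 x3 : R) :
  ((cv_of_seq 4 [:: x0; x1; x2; x3])^T *m B4 *m cv_of_seq 4 [:: x0; x1; x2; x3]) 0 0 = (4 - 2 * t) * x0 * x0 + (3 - t) * x0 * x1 + 2 * x0 * x2 + t * x0 * x3 + (3 - t) * x1 * x0 + (6 - 2 * t) * x1 * x1 + 4 * x1 * x2 + 2 * t * x1 * x3 + 2 * x2 * x0 + 4 * x2 * x1 + 6 * x2 * x2 + 3 * t * x2 * x3 + t * x3 * x0 + 2 * t * x3 * x1 + 3 * t * x3 * x2 + 4 * x3 * x3.
Proof.
rewrite !mxE !big_ord_recr big_ord0 /= !mxE !big_ord_recr !big_ord0 /= !mxE /=.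
ring.
Qed.

Lemma id4 (x M0 M1 M2 M3 N0 N1 N2 N3 : R) :
  2 * (5 - 3 * x) - ((4 - 2 * x) * (M0 + N0 * x) * (M0 + N0 * x) + (3 - x) * (M0 + N0 * x) * (M1 + N1 * x) + 2 * (M0 + N0 * x) * (M2 + N2 * x) + x * (M0 + N0 * x) * (M3 + N3 * x) + (3 - x) * (M1 + N1 * x) * (M0 + N0 * x) + (6 - 2 * x) * (M1 + N1 * x) * (M1 + N1 * x) + 4 * (M1 + N1 * x) * (M2 + N2 * x) + 2 * x * (M1 + N1 * x) * (M3 + N3 * x) + 2 * (M2 + N2 * x) * (M0 + N0 * x) + 4 * (M2 + N2 * x) * (M1 + N1 * x) + 6 * (M2 + N2 * x) * (M2 + N2 * x) + 3 * x * (M2 + N2 * x) * (M3 + N3 * x) + x * (M3 + N3 * x) * (M0 + N0 * x) + 2 * x * (M3 + N3 * x) * (M1 + N1 * x) + 3 * x * (M3 + N3 * x) * (M2 + N2 * x) + 4 * (M3 + N3 * x) * (M3 + N3 * x)) =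
  PP4 M0 M1 M2 M3 N0 N1 N2 N3 + QQ4 M0 M1 M2 M3 N0 N1 N2 N3 * x + (x ^+ 2 - x - 1) * (4 * M0 * N0 + 2 * M0 * N1 + (-2) * M0 * N3 + 2 * M1 * N0 + 4 * M1 * N1 + (-4) * M1 * N3 + (-6) * M2 * N3 + (-2) * M3 * N0 + (-4) * M3 * N1 + (-6) * M3 * N2 + (-4) * N0 * N1 + 2 * N0 * N1 * x + (-4) * N0 * N2 + (-2) * N0 * N3 + (-2) * N0 * N3 * x + (-2) * N0 ^+ 2 + 2 * N0 ^+ 2 * x + (-8) * N1 * N2 + (-4) * N1 * N3 + (-4) * N1 * N3 * x + (-4) * N1 ^+ 2 + 2 * N1 ^+ 2 * x + (-6) * N2 * N3 + (-6) * N2 * N3 * x + (-6) * N2 ^+ 2 + (-4) * N3 ^+ 2).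
Proof. rewrite /PP4 /QQ4; ring. Qed.

Lemma castPP4 (M0 M1 M2 M3 N0 N1 N2 N3 : int) :
  (PP4 M0 M1 M2 M3 N0 N1 N2 N3)%:~R = PP4 M0%:~R M1%:~R M2%:~R M3%:~R N0%:~R N1%:~R N2%:~R N3%:~R :> R.
Proof. rewrite /PP4; ring. Qed.
Lemma castQQ4 (M0 M1 M2 M3 N0 N1 N2 N3 : int) :
  (QQ4 M0 M1 M2 M3 N0 N1 N2 N3)%:~R = QQ4 M0%:~R M1%:~R M2%:~R M3%:~R N0%:~R N1%:~R N2%:~R N3%:~R :> R.
Proof. rewrite /QQ4; ring. Qed.

Definition S4 (M N : R) : R := ((-8) * M * N + 7 * M ^+ 2 + 3 * N ^+ 2).
Lemma idS4 (x M N : R) :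
  (5 - 3 * x) * (M + N * x) ^+ 2 + (2 + 3 * x) * (M + N * (1 - x)) ^+ 2
  = S4 M N + (x ^+ 2 - x - 1) * ((-12) * M * N + N ^+ 2).
Proof. rewrite /S4; ring. Qed.

Lemma cert4_0 (M0 M1 M2 M3 N0 N1 N2 N3 : R) :
  PP4 M0 M1 M2 M3 N0 N1 N2 N3 = 0 -> QQ4 M0 M1 M2 M3 N0 N1 N2 N3 = 0 -> S4 M0 N0 <= 560/19.
Proof.
rewrite /PP4 /QQ4 /S4 => hP hQ.
have := sqr_ge0 (107 * M0 + 200 * M1 + 160 * M2 + 40 * M3 + (-4) * N0 + 80 * N2 + 120 * N3).
have := sqr_ge0 (35 * M1 + 28 * M2 + 7 * M3 + 10 * N0 + 14 * N2 + 21 * N3).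
have := sqr_ge0 (28 * M2 + 7 * M3 + 10 * N0 + 20 * N1 + 14 * N2 + 21 * N3).
have := sqr_ge0 (29 * M3 + 10 * N0 + 20 * N1 + 30 * N2 + 7 * N3).
have := sqr_ge0 (1529 * N0 + 3000 * N1 + 3920 * N2 + 3080 * N3).
have := sqr_ge0 (75 * N1 + 98 * N2 + 77 * N3).
have := sqr_ge0 (14 * N2 + 11 * N3).
have := sqr_ge0 (1 * N3).
lra.
Qed.

Lemma cert4_1 (M0 M1 M2 M3 N0 N1 N2 N3 : R) :
  PP4 M0 M1 M2 M3 N0 N1 N2 N3 = 0 -> QQ4 M0 M1 M2 M3 N0 N1 N2 N3 = 0 -> S4 M1 N1 <= 560/19.
Proof.
rewrite /PP4 /QQ4 /S4 => hP hQ.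
have := sqr_ge0 (6 * M0 + 5 * M1 + 4 * M2 + 1 * M3 + (-2) * N0 + 2 * N2 + 3 * N3).
have := sqr_ge0 (301 * M1 + 560 * M2 + 140 * M3 + 200 * N0 + 228 * N1 + 280 * N2 + 420 * N3).
have := sqr_ge0 (28 * M2 + 7 * M3 + 10 * N0 + 20 * N1 + 14 * N2 + 21 * N3).
have := sqr_ge0 (29 * M3 + 10 * N0 + 20 * N1 + 30 * N2 + 7 * N3).
have := sqr_ge0 (52 * N0 + 75 * N1 + 98 * N2 + 77 * N3).
have := sqr_ge0 (503 * N1 + 980 * N2 + 770 * N3).
have := sqr_ge0 (14 * N2 + 11 * N3).
have := sqr_ge0 (1 * N3).
lra.
Qed.

Lemma cert4_2 (M0 M1 M2 M3 N0 N1 N2 N3 : R) :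
  PP4 M0 M1 M2 M3 N0 N1 N2 N3 = 0 -> QQ4 M0 M1 M2 M3 N0 N1 N2 N3 = 0 -> S4 M2 N2 <= 560/19.
Proof.
rewrite /PP4 /QQ4 /S4 => hP hQ.
have := sqr_ge0 (6 * M0 + 5 * M1 + 4 * M2 + 1 * M3 + (-2) * N0 + 2 * N2 + 3 * N3).
have := sqr_ge0 (35 * M1 + 28 * M2 + 7 * M3 + 10 * N0 + 14 * N2 + 21 * N3).
have := sqr_ge0 (91 * M2 + 56 * M3 + 80 * N0 + 160 * N1 + 188 * N2 + 168 * N3).
have := sqr_ge0 (438 * M3 + 115 * N0 + 230 * N1 + 345 * N2 + 14 * N3).
have := sqr_ge0 (389 * N0 + 340 * N1 + 291 * N2 + 154 * N3).
have := sqr_ge0 (340 * N1 + 291 * N2 + 154 * N3).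
have := sqr_ge0 (37 * N2 + 44 * N3).
have := sqr_ge0 (1 * N3).
lra.
Qed.

Lemma cert4_3 (M0 M1 M2 M3 N0 N1 N2 N3 : R) :
  PP4 M0 M1 M2 M3 N0 N1 N2 N3 = 0 -> QQ4 M0 M1 M2 M3 N0 N1 N2 N3 = 0 -> S4 M3 N3 <= 560/19.
Proof.
rewrite /PP4 /QQ4 /S4 => hP hQ.
have := sqr_ge0 (6 * M0 + 5 * M1 + 4 * M2 + 1 * M3 + (-2) * N0 + 2 * N2 + 3 * N3).
have := sqr_ge0 (35 * M1 + 28 * M2 + 7 * M3 + 10 * N0 + 14 * N2 + 21 * N3).
have := sqr_ge0 (28 * M2 + 7 * M3 + 10 * N0 + 20 * N1 + 14 * N2 + 21 * N3).
have := sqr_ge0 (157 * M3 + 100 * N0 + 200 * N1 + 300 * N2 + 146 * N3).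
have := sqr_ge0 (242 * N0 + 170 * N1 + 98 * N2 + 77 * N3).
have := sqr_ge0 (170 * N1 + 98 * N2 + 77 * N3).
have := sqr_ge0 (14 * N2 + 11 * N3).
have := sqr_ge0 (1 * N3).
lra.
Qed.

Lemma xp4 (x M N : R) : 144/89 < x -> x < 89/55 -> x ^+ 2 = x + 1 ->
  S4 M N <= 560/19 -> (M + N * (1 - x)) ^+ 2 <= 6.
Proof.
move=> tl tu htt hS.
have hz : x ^+ 2 - x - 1 = 0 by rewrite htt; ring.
have := idS4 x M N; rewrite hz mul0r addr0 => hid.
have h1 : 0 <= (5 - 3 * x) * (M + N * x) ^+ 2 by apply: mulr_ge0; [lra|apply: sqr_ge0].
have h2 : 0 <= ((2 + 3 * x) - 34/5) * (M + N * (1 - x)) ^+ 2 by apply: mulr_ge0; [lra|apply: sqr_ge0].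
move: hid h1 h2 hS. set Y := (M + N * (1 - x)) ^+ 2. set Z := (M + N * x) ^+ 2. move=> hid h1 h2 hS.
lra.
Qed.

Lemma xb4_0 (x x0 x1 x2 x3 : R) : 144/89 < x -> x < 89/55 -> x0 <= 0 -> x1 <= 0 -> x2 <= 0 -> x3 <= 0 ->
  (4 - 2 * x) * x0 * x0 + (3 - x) * x0 * x1 + 2 * x0 * x2 + x * x0 * x3 + (3 - x) * x1 * x0 + (6 - 2 * x) * x1 * x1 + 4 * x1 * x2 + 2 * x * x1 * x3 + 2 * x2 * x0 + 4 * x2 * x1 + 6 * x2 * x2 + 3 * x * x2 * x3 + x * x3 * x0 + 2 * x * x3 * x1 + 3 * x * x3 * x2 + 4 * x3 * x3 = 2 * (5 - 3 * x) -> x0 ^+ 2 <= 36/25.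
Proof.
move=> tl tu h0 h1 h2 h3 hq.
have p00 : 0 <= x0 * x0 by rewrite -expr2; apply: sqr_ge0.
have := mulr_ge0 (ltW (xlo tl)) p00.
have := mulr_ge0 (ltW (xhi tu)) p00.
have p01 : 0 <= x0 * x1 by apply: mulr_le0.
have := mulr_ge0 (ltW (xlo tl)) p01.
have := mulr_ge0 (ltW (xhi tu)) p01.
have p02 : 0 <= x0 * x2 by apply: mulr_le0.
have := mulr_ge0 (ltW (xlo tl)) p02.
have := mulr_ge0 (ltW (xhi tu)) p02.
have p03 : 0 <= x0 * x3 by apply: mulr_le0.
have := mulr_ge0 (ltW (xlo tl)) p03.
have := mulr_ge0 (ltW (xhi tu)) p03.
have p11 : 0 <= x1 * x1 by rewrite -expr2; apply: sqr_ge0.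
have := mulr_ge0 (ltW (xlo tl)) p11.
have := mulr_ge0 (ltW (xhi tu)) p11.
have p12 : 0 <= x1 * x2 by apply: mulr_le0.
have := mulr_ge0 (ltW (xlo tl)) p12.
have := mulr_ge0 (ltW (xhi tu)) p12.
have p13 : 0 <= x1 * x3 by apply: mulr_le0.
have := mulr_ge0 (ltW (xlo tl)) p13.
have := mulr_ge0 (ltW (xhi tu)) p13.
have p22 : 0 <= x2 * x2 by rewrite -expr2; apply: sqr_ge0.
have := mulr_ge0 (ltW (xlo tl)) p22.
have := mulr_ge0 (ltW (xhi tu)) p22.
have p23 : 0 <= x2 * x3 by apply: mulr_le0.
have := mulr_ge0 (ltW (xlo tl)) p23.
have := mulr_ge0 (ltW (xhi tu)) p23.
have p33 : 0 <= x3 * x3 by rewrite -expr2; apply: sqr_ge0.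
have := mulr_ge0 (ltW (xlo tl)) p33.
have := mulr_ge0 (ltW (xhi tu)) p33.
rewrite expr2. lra.
Qed.

Lemma xb4_1 (x x0 x1 x2 x3 : R) : 144/89 < x -> x < 89/55 -> x0 <= 0 -> x1 <= 0 -> x2 <= 0 -> x3 <= 0 ->
  (4 - 2 * x) * x0 * x0 + (3 - x) * x0 * x1 + 2 * x0 * x2 + x * x0 * x3 + (3 - x) * x1 * x0 + (6 - 2 * x) * x1 * x1 + 4 * x1 * x2 + 2 * x * x1 * x3 + 2 * x2 * x0 + 4 * x2 * x1 + 6 * x2 * x2 + 3 * x * x2 * x3 + x * x3 * x0 + 2 * x * x3 * x1 + 3 * x * x3 * x2 + 4 * x3 * x3 = 2 * (5 - 3 * x) -> x1 ^+ 2 <= 36/25.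
Proof.
move=> tl tu h0 h1 h2 h3 hq.
have p00 : 0 <= x0 * x0 by rewrite -expr2; apply: sqr_ge0.
have := mulr_ge0 (ltW (xlo tl)) p00.
have := mulr_ge0 (ltW (xhi tu)) p00.
have p01 : 0 <= x0 * x1 by apply: mulr_le0.
have := mulr_ge0 (ltW (xlo tl)) p01.
have := mulr_ge0 (ltW (xhi tu)) p01.
have p02 : 0 <= x0 * x2 by apply: mulr_le0.
have := mulr_ge0 (ltW (xlo tl)) p02.
have := mulr_ge0 (ltW (xhi tu)) p02.
have p03 : 0 <= x0 * x3 by apply: mulr_le0.
have := mulr_ge0 (ltW (xlo tl)) p03.
have := mulr_ge0 (ltW (xhi tu)) p03.
have p11 : 0 <= x1 * x1 by rewrite -expr2; apply: sqr_ge0.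
have := mulr_ge0 (ltW (xlo tl)) p11.
have := mulr_ge0 (ltW (xhi tu)) p11.
have p12 : 0 <= x1 * x2 by apply: mulr_le0.
have := mulr_ge0 (ltW (xlo tl)) p12.
have := mulr_ge0 (ltW (xhi tu)) p12.
have p13 : 0 <= x1 * x3 by apply: mulr_le0.
have := mulr_ge0 (ltW (xlo tl)) p13.
have := mulr_ge0 (ltW (xhi tu)) p13.
have p22 : 0 <= x2 * x2 by rewrite -expr2; apply: sqr_ge0.
have := mulr_ge0 (ltW (xlo tl)) p22.
have := mulr_ge0 (ltW (xhi tu)) p22.
have p23 : 0 <= x2 * x3 by apply: mulr_le0.
have := mulr_ge0 (ltW (xlo tl)) p23.
have := mulr_ge0 (ltW (xhi tu)) p23.
have p33 : 0 <= x3 * x3 by rewrite -expr2; apply: sqr_ge0.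
have := mulr_ge0 (ltW (xlo tl)) p33.
have := mulr_ge0 (ltW (xhi tu)) p33.
rewrite expr2. lra.
Qed.

Lemma xb4_2 (x x0 x1 x2 x3 : R) : 144/89 < x -> x < 89/55 -> x0 <= 0 -> x1 <= 0 -> x2 <= 0 -> x3 <= 0 ->
  (4 - 2 * x) * x0 * x0 + (3 - x) * x0 * x1 + 2 * x0 * x2 + x * x0 * x3 + (3 - x) * x1 * x0 + (6 - 2 * x) * x1 * x1 + 4 * x1 * x2 + 2 * x * x1 * x3 + 2 * x2 * x0 + 4 * x2 * x1 + 6 * x2 * x2 + 3 * x * x2 * x3 + x * x3 * x0 + 2 * x * x3 * x1 + 3 * x * x3 * x2 + 4 * x3 * x3 = 2 * (5 - 3 * x) -> x2 ^+ 2 <= 36/25.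
Proof.
move=> tl tu h0 h1 h2 h3 hq.
have p00 : 0 <= x0 * x0 by rewrite -expr2; apply: sqr_ge0.
have := mulr_ge0 (ltW (xlo tl)) p00.
have := mulr_ge0 (ltW (xhi tu)) p00.
have p01 : 0 <= x0 * x1 by apply: mulr_le0.
have := mulr_ge0 (ltW (xlo tl)) p01.
have := mulr_ge0 (ltW (xhi tu)) p01.
have p02 : 0 <= x0 * x2 by apply: mulr_le0.
have := mulr_ge0 (ltW (xlo tl)) p02.
have := mulr_ge0 (ltW (xhi tu)) p02.
have p03 : 0 <= x0 * x3 by apply: mulr_le0.
have := mulr_ge0 (ltW (xlo tl)) p03.
have := mulr_ge0 (ltW (xhi tu)) p03.
have p11 : 0 <= x1 * x1 by rewrite -expr2; apply: sqr_ge0.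
have := mulr_ge0 (ltW (xlo tl)) p11.
have := mulr_ge0 (ltW (xhi tu)) p11.
have p12 : 0 <= x1 * x2 by apply: mulr_le0.
have := mulr_ge0 (ltW (xlo tl)) p12.
have := mulr_ge0 (ltW (xhi tu)) p12.
have p13 : 0 <= x1 * x3 by apply: mulr_le0.
have := mulr_ge0 (ltW (xlo tl)) p13.
have := mulr_ge0 (ltW (xhi tu)) p13.
have p22 : 0 <= x2 * x2 by rewrite -expr2; apply: sqr_ge0.
have := mulr_ge0 (ltW (xlo tl)) p22.
have := mulr_ge0 (ltW (xhi tu)) p22.
have p23 : 0 <= x2 * x3 by apply: mulr_le0.
have := mulr_ge0 (ltW (xlo tl)) p23.
have := mulr_ge0 (ltW (xhi tu)) p23.
have p33 : 0 <= x3 * x3 by rewrite -expr2; apply: sqr_ge0.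
have := mulr_ge0 (ltW (xlo tl)) p33.
have := mulr_ge0 (ltW (xhi tu)) p33.
rewrite expr2. lra.
Qed.

Lemma xb4_3 (x x0 x1 x2 x3 : R) : 144/89 < x -> x < 89/55 -> x0 <= 0 -> x1 <= 0 -> x2 <= 0 -> x3 <= 0 ->
  (4 - 2 * x) * x0 * x0 + (3 - x) * x0 * x1 + 2 * x0 * x2 + x * x0 * x3 + (3 - x) * x1 * x0 + (6 - 2 * x) * x1 * x1 + 4 * x1 * x2 + 2 * x * x1 * x3 + 2 * x2 * x0 + 4 * x2 * x1 + 6 * x2 * x2 + 3 * x * x2 * x3 + x * x3 * x0 + 2 * x * x3 * x1 + 3 * x * x3 * x2 + 4 * x3 * x3 = 2 * (5 - 3 * x) -> x3 ^+ 2 <= 36/25.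
Proof.
move=> tl tu h0 h1 h2 h3 hq.
have p00 : 0 <= x0 * x0 by rewrite -expr2; apply: sqr_ge0.
have := mulr_ge0 (ltW (xlo tl)) p00.
have := mulr_ge0 (ltW (xhi tu)) p00.
have p01 : 0 <= x0 * x1 by apply: mulr_le0.
have := mulr_ge0 (ltW (xlo tl)) p01.
have := mulr_ge0 (ltW (xhi tu)) p01.
have p02 : 0 <= x0 * x2 by apply: mulr_le0.
have := mulr_ge0 (ltW (xlo tl)) p02.
have := mulr_ge0 (ltW (xhi tu)) p02.
have p03 : 0 <= x0 * x3 by apply: mulr_le0.
have := mulr_ge0 (ltW (xlo tl)) p03.
have := mulr_ge0 (ltW (xhi tu)) p03.
have p11 : 0 <= x1 * x1 by rewrite -expr2; apply: sqr_ge0.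
have := mulr_ge0 (ltW (xlo tl)) p11.
have := mulr_ge0 (ltW (xhi tu)) p11.
have p12 : 0 <= x1 * x2 by apply: mulr_le0.
have := mulr_ge0 (ltW (xlo tl)) p12.
have := mulr_ge0 (ltW (xhi tu)) p12.
have p13 : 0 <= x1 * x3 by apply: mulr_le0.
have := mulr_ge0 (ltW (xlo tl)) p13.
have := mulr_ge0 (ltW (xhi tu)) p13.
have p22 : 0 <= x2 * x2 by rewrite -expr2; apply: sqr_ge0.
have := mulr_ge0 (ltW (xlo tl)) p22.
have := mulr_ge0 (ltW (xhi tu)) p22.
have p23 : 0 <= x2 * x3 by apply: mulr_le0.
have := mulr_ge0 (ltW (xlo tl)) p23.
have := mulr_ge0 (ltW (xhi tu)) p23.
have p33 : 0 <= x3 * x3 by rewrite -expr2; apply: sqr_ge0.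
have := mulr_ge0 (ltW (xlo tl)) p33.
have := mulr_ge0 (ltW (xhi tu)) p33.
rewrite expr2. lra.
Qed.

Lemma uniq4 (a : 'cV[R]_4) : (forall i, in_Ztau_neg (a i 0)) ->
  \det (ext_mx (A4 R) a) = 0 -> a = cv_of_seq 4 [:: tau' R; 0; 0; 0].
Proof.
move=> ha hdet.
have ea : a = cv_of_seq 4 [:: a (inord 0) 0; a (inord 1) 0; a (inord 2) 0; a (inord 3) 0].
  apply/matrixP => i j; rewrite ord1 mxE.
  case: i => [i Hi]; do 4 (case: i Hi => [|i] Hi; first by congr (a _ _); apply: val_inj; rewrite /= inordK).
  by exfalso; move: Hi; rewrite !ltnS ltn0.
move: hdet; rewrite ea.
move: (ha (inord 0)) (ha (inord 1)) (ha (inord 2)) (ha (inord 3)).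
move: (a (inord 0) 0) (a (inord 1) 0) (a (inord 2) 0) (a (inord 3) 0) => x0 x1 x2 x3.
move=> [[m0 [n0 ->]] h0] [[m1 [n1 ->]] h1] [[m2 [n2 ->]] h2] [[m3 [n3 ->]] h3].
have [tl tu] := tb R.
have hd : (5 - 3 * t) != 0 by apply: lt0r_neq0; lra.
move/eqP; rewrite (@schur R _ _ _ _ _ (AB4 R) hd) scal4 => /eqP hq.
have hz : t ^+ 2 - t - 1 = 0 by rewrite (t2 R); ring.
have hPQ := id4 t m0%:~R m1%:~R m2%:~R m3%:~R n0%:~R n1%:~R n2%:~R n3%:~R.
rewrite hz mul0r addr0 hq subrr in hPQ.
have [hP hQ] : PP4 m0 m1 m2 m3 n0 n1 n2 n3 = 0 /\ QQ4 m0 m1 m2 m3 n0 n1 n2 n3 = 0.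
  apply: (@irr R); rewrite castPP4 castQQ4; exact/esym.
have hPr : PP4 m0%:~R m1%:~R m2%:~R m3%:~R n0%:~R n1%:~R n2%:~R n3%:~R = 0 :> R by rewrite -castPP4 hP.
have hQr : QQ4 m0%:~R m1%:~R m2%:~R m3%:~R n0%:~R n1%:~R n2%:~R n3%:~R = 0 :> R by rewrite -castQQ4 hQ.
have hxb0 := xb4_0 tl tu h0 h1 h2 h3 hq.
have c0 := cand (sqb hxb0) h0 (xp4 tl tu (t2 R) (cert4_0 hPr hQr)).
have hxb1 := xb4_1 tl tu h0 h1 h2 h3 hq.
have c1 := cand (sqb hxb1) h1 (xp4 tl tu (t2 R) (cert4_1 hPr hQr)).
have hxb2 := xb4_2 tl tu h0 h1 h2 h3 hq.
have c2 := cand (sqb hxb2) h2 (xp4 tl tu (t2 R) (cert4_2 hPr hQr)).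
have hxb3 := xb4_3 tl tu h0 h1 h2 h3 hq.
have c3 := cand (sqb hxb3) h3 (xp4 tl tu (t2 R) (cert4_3 hPr hQr)).
move: hP hQ.
case: c0 => [[-> ->]|[-> ->]|[-> ->]]; case: c1 => [[-> ->]|[-> ->]|[-> ->]]; case: c2 => [[-> ->]|[-> ->]|[-> ->]]; case: c3 => [[-> ->]|[-> ->]|[-> ->]].
all: move=> hP hQ.
all: try (exfalso; clear -hP hQ; move: hP hQ; rewrite /PP4 /QQ4; lia).
rewrite (tau'E R); congr (cv_of_seq _ [:: _; _; _; _]); ring.
Qed.

Lemma ex4 : (forall i, in_Ztau_neg ((cv_of_seq 4 [:: tau' R; 0; 0; 0]) i 0)) /\
  \det (ext_mx (A4 R) (cv_of_seq 4 [:: tau' R; 0; 0; 0])) = 0.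
Proof.
split.
- move=> i; rewrite mxE; case: i => [i Hi].
  do 4 (case: i Hi => [|i] Hi; first by rewrite /=; first [exact: ztn' | exact: ztn0]).
  by exfalso; move: Hi; rewrite !ltnS ltn0.
- have [tl tu] := tb R.
  have hd : (5 - 3 * t) != 0 by apply: lt0r_neq0; lra.
  apply/eqP; rewrite (@schur R _ _ _ _ _ (AB4 R) hd) scal4; apply/eqP.
  rewrite (tau'E R). have := t2 R. have := t3 R. lra.
Qed.

Lemma case4 : unique_extension (A4 R) (cv_of_seq 4 [:: tau' R; 0; 0; 0]).
Proof. have [h1 h2] := ex4. split => //. exact: uniq4. Qed.

End Main.

Theorem mainTheorem1 (R : realType) :
  [/\ unique_extension (A2 R) (cv_of_seq 2 [:: tau' R; tau' R]),
      unique_extension (A3 R) (cv_of_seq 3 [:: 0; tau' R; 0]) &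
      unique_extension (A4 R) (cv_of_seq 4 [:: tau' R; 0; 0; 0])].
Proof. split; [exact: (case2 R) | exact: (case3 R) | exact: (case4 R)]. Qed.
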